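(* For each $t\in\{0,1,\dots,T\}$ and every state $(\bm{x},k)=((x_1,\dots,x_N),k)\in\mathbb{Z}^N\times\mathbb{N}_0$, $$V^N_t(\bm{x},k)=\sum_{i=1}^N\tilde V^{N,i}_t(x_i,k).$$
   Context: Spare parts setting. Fix integers $N\ge1$, $T\ge1$, reals $\alpha_0,\beta_0>0$, and for each $i\in\mathcal{N}=\{1,\dots,N\}$ unit costs $c_v^i,c_h^i,c_b^i>0$ (transportation, holding, backorder) with $c_b^i>c_v^i$. $\mathbb{N}_0=\{0,1,2,\dots\}$, $y^+=\max(y,0)$. For real $r>0$ and $p\in(0,1)$, $NB(r,p)$ is the distribution on $\mathbb{N}_0$ with $P(n)=\frac{\Gamma(n+r)}{\Gamma(r)n!}p^r(1-p)^n$; $NB(0,p)$ is the point mass at $0$. For $t\in\{0,\dots,T\}$ let $p_t=\frac{\beta_0+Nt}{\beta_0+Nt+1}$. At epoch $t$ and statistic $k$ let $Z\sim NB(\alpha_0+k,p_t)$, $K\sim NB((N-1)(\alpha_0+k),p_t)$ independent, and set $C_i(a,x,k)=c_v^i(a-x)+c_h^i\mathbb{E}[(a-Z)^+]+c_b^i\mathbb{E}[(Z-a)^+]$ for integers $a\ge x$. Original MDP: state $(\bm{x},k)\in\mathbb{Z}^N\times\mathbb{N}_0$ ($x_i$ = net inventory of warehouse $i$, $k$ = total demand observed); actions $\bm{a}\in\mathbb{Z}^N$ with $a_i\ge x_i$; $V^N_T\equiv0$ and for $t=T-1,\dots,0$: $V^N_t(\bm{x},k)=\min_{\bm{a}}\{\sum_iC_i(a_i,x_i,k)+\mathbb{E}[V^N_{t+1}(\bm{a}-\bm{Z},k+\sum_iZ_i)]\}$,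 with $Z_1,\dots,Z_N$ i.i.d. $NB(\alpha_0+k,p_t)$. Alternative MDP: $\tilde V^{N,i}_T\equiv0$ and for $t=T-1,\dots,0$, $(x,k)\in\mathbb{Z}\times\mathbb{N}_0$: $\tilde V^{N,i}_t(x,k)=\min_{a\in\mathbb{Z},a\ge x}\{C_i(a,x,k)+\mathbb{E}[\tilde V^{N,i}_{t+1}(a-Z,k+Z+K)]\}$. *)

(* Defs.v *)
From HB Require Import structures.
From mathcomp Require Import all_boot all_order all_algebra.
From mathcomp Require Import all_classical all_reals all_analysis.
Set Implicit Arguments. Unset Strict Implicit. Unset Printing Implicit Defensive.
Import Order.TTheory GRing.Theory Num.Theory.
Local Open Scope ring_scope.
Local Open Scope classical_set_scope.

Section SpareParts.
Variable R : realType.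

(* Negative binomial pmf NB(r,p) at n:
   Gamma(n+r)/(Gamma(r) n!) p^r (1-p)^n, where Gamma(n+r)/Gamma(r) is written
   out as the rising factorial prod_{j<n} (r+j).  For r = 0 this is the point
   mass at 0 (the product contains the factor r = 0 as soon as n >= 1). *)
Definition nb_pmf (r p : R) (n : nat) : R :=
  (\prod_(j < n) (r + j%:R)) / (n`!)%:R * powR p r * (1 - p) ^+ n.

Definition p_ep (beta0 : R) (N t : nat) : R :=
  (beta0 + (N * t)%:R) / (beta0 + (N * t)%:R + 1).

Definition E_nb (r p : R) (f : nat -> \bar R) : \bar R :=
  (\esum_(n in [set: nat]) ((nb_pmf r p n)%:E * f n))%E.

Definition pospart (y : int) : R := Num.max 0 (y%:~R).

Definition cost (alpha0 beta0 : R) (N t : nat) (cv ch cb : R)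
    (a x : int) (k : nat) : \bar R :=
  let r := alpha0 + k%:R in
  let p := p_ep beta0 N t in
  ((cv * (a - x)%:~R)%:E
   + ch%:E * E_nb r p (fun z => (pospart (a - z%:Z))%:E)
   + cb%:E * E_nb r p (fun z => (pospart (z%:Z - a))%:E))%E.

(* Z_1..Z_N i.i.d. NB(alpha0+k, p_t); the expectation is the sum over all
   outcomes z in N_0^N of prod_i P(z_i) * V_{t+1}(a - z, k + sum_i z_i).
   The "min" over actions is the infimum over {a in Z^N | a_i >= x_i}. *)
Definition bellman_orig (N : nat) (alpha0 beta0 : R) (cv ch cb : 'I_N -> R)
    (t : nat) (W : ('I_N -> int) -> nat -> \bar R)
    (x : 'I_N -> int) (k : nat) : \bar R :=
  let r := alpha0 + k%:R in
  let p := p_ep beta0 N t in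
  ereal_inf [set (\sum_(i < N) cost alpha0 beta0 N t (cv i) (ch i) (cb i) (a i) (x i) k
                  + \esum_(z in [set: {ffun 'I_N -> nat}])
                      ((\prod_(i < N) nb_pmf r p (z i))%:E
                       * W (fun i => (a i - (z i)%:Z)%R) (k + \sum_(i < N) z i)%N))%E
            | a in [set a : 'I_N -> int | forall i, x i <= a i]].

(* vorig n t = value function at epoch t when n epochs remain (t + n = T). *)
Fixpoint vorig (N : nat) (alpha0 beta0 : R) (cv ch cb : 'I_N -> R)
    (n t : nat) : ('I_N -> int) -> nat -> \bar R :=
  match n with
  | 0 => fun _ _ => 0%E
  | n'.+1 => bellman_orig alpha0 beta0 cv ch cb t
               (vorig alpha0 beta0 cv ch cb n' t.+1)
  end.

Definition V_orig (N T : nat) (alpha0 beta0 : R) (cv ch cb : 'I_N -> R)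
    (t : nat) : ('I_N -> int) -> nat -> \bar R :=
  vorig alpha0 beta0 cv ch cb (T - t) t.

(* Z ~ NB(alpha0+k, p_t), K ~ NB((N-1)(alpha0+k), p_t) independent. *)
Definition bellman_alt (N : nat) (alpha0 beta0 cv ch cb : R)
    (t : nat) (W : int -> nat -> \bar R) (x : int) (k : nat) : \bar R :=
  let r := alpha0 + k%:R in
  let p := p_ep beta0 N t in
  ereal_inf [set (cost alpha0 beta0 N t cv ch cb a x k
                  + \esum_(zk in [set: nat * nat])
                      ((nb_pmf r p zk.1 * nb_pmf ((N - 1)%:R * r) p zk.2)%:E
                       * W (a - (zk.1)%:Z)%R (k + zk.1 + zk.2)%N))%E
            | a in [set a : int | x <= a]].

Fixpoint valt (N : nat) (alpha0 beta0 cv ch cb : R) (n t : nat)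
    : int -> nat -> \bar R :=
  match n with
  | 0 => fun _ _ => 0%E
  | n'.+1 => bellman_alt N alpha0 beta0 cv ch cb t
               (valt N alpha0 beta0 cv ch cb n' t.+1)
  end.

Definition V_alt (N T : nat) (alpha0 beta0 : R) (cv ch cb : 'I_N -> R)
    (i : 'I_N) (t : nat) : int -> nat -> \bar R :=
  valt N alpha0 beta0 (cv i) (ch i) (cb i) (T - t) t.

End SpareParts.

(* Main.v *)
Require Import Defs.
From HB Require Import structures.
From mathcomp Require Import all_boot all_order all_algebra.
From mathcomp Require Import all_classical all_reals all_analysis.
From mathcomp Require Import ring lra zify.
Import Order.TTheory GRing.Theory Num.Theory.
Local Open Scope ring_scope.

Module H.
Set Implicit Arguments. Unset Strict Implicit. Unset Printing Implicit Defensive.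
Local Open Scope classical_set_scope.
Section Arith.
Variable R : realType.

Definition Pr (r : R) n := \prod_(j < n) (r + j%:R).

Lemma PrS r n : Pr r n.+1 = Pr r n * (r + n%:R).
Proof. by rewrite /Pr big_ord_recr. Qed.

Lemma Pr0 r : Pr r 0 = 1.
Proof. by rewrite /Pr big_ord0. Qed.

Lemma vander (r s : R) n :
  \sum_(x < n.+1) ('C(n, x))%:R * Pr r x * Pr s (n - x) = Pr (r + s) n.
Proof.
elim: n => [|n IH]; first by rewrite big_ord_recl big_ord0 !Pr0 bin0 addr0 !mulr1.
rewrite PrS -IH mulr_suml.
have E1 : \sum_(i < n.+1) 'C(n, i)%:R * Pr r i * Pr s (n - i) * (r + s + n%:R)
  = \sum_(i < n.+1) 'C(n, i)%:R * Pr r i.+1 * Pr s (n - i)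
    + \sum_(i < n.+1) 'C(n, i)%:R * Pr r i * Pr s (n.+1 - i).
  rewrite -big_split /=; apply: eq_bigr => i _.
  have hi : (i <= n)%N by rewrite -ltnS.
  rewrite PrS subSn // PrS natrB //; ring.
rewrite E1 big_ord_recl bin0 Pr0 subn0.
under eq_bigr do rewrite binS natrD subSS !mulrDl.
rewrite big_split /=.
rewrite [X in _ = _ + X]big_ord_recl bin0 Pr0 subn0.
rewrite [in LHS](big_ord_recr n) /= bin_small // !mul0r addr0.
rewrite [in RHS]addrC -!addrA; congr (_ + _).

Qed.

Lemma nb_pmfE r p n : nb_pmf r p n = Pr r n / (n`!)%:R * powR p r * (1 - p) ^+ n.
Proof. by []. Qed.

Lemma nb_conv (r s p : R) n : 0 < p ->
  \sum_(x < n.+1) nb_pmf r p x * nb_pmf s p (n - x) = nb_pmf (r + s) p n.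
Proof.
move=> p0.
have key x : (x <= n)%N -> nb_pmf r p x * nb_pmf s p (n - x) =
   'C(n, x)%:R * Pr r x * Pr s (n - x) * ((n`!)%:R^-1 * powR p (r + s) * (1 - p) ^+ n).
  move=> hx.
  rewrite !nb_pmfE powRD; last by rewrite implybE (gt_eqF p0) orbT.
  have -> : (1 - p) ^+ n = (1 - p) ^+ x * (1 - p) ^+ (n - x) by rewrite -exprD subnKC.
  have -> : (n`!)%:R = ('C(n, x))%:R * ((x`!)%:R * ((n - x)`!)%:R) :> R
    by rewrite -!natrM bin_fact.
  have h1 : (x`!)%:R != 0 :> R by rewrite pnatr_eq0 -lt0n fact_gt0.
  have h2 : ((n - x)`!)%:R != 0 :> R by rewrite pnatr_eq0 -lt0n fact_gt0.
  have h3 : ('C(n, x))%:R != 0 :> R by rewrite pnatr_eq0 -lt0n bin_gt0.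
  field.
  by rewrite h1 h2 h3.
rewrite (eq_bigr _ (fun (x : 'I_n.+1) _ => key x (ltnSE (ltn_ord x)))) -mulr_suml vander nb_pmfE.
by rewrite !mulrA.
Qed.


Lemma nb_pmf_ge0 (r p : R) n : 0 <= r -> p <= 1 -> 0 <= nb_pmf r p n.
Proof.
move=> r0 p1; rewrite nb_pmfE; apply: mulr_ge0; last by rewrite exprn_ge0 // subr_ge0.
apply: mulr_ge0; last exact: powR_ge0.
apply: divr_ge0 => //; apply: prodr_ge0 => j _; exact: addr_ge0.
Qed.

Lemma nb_pmf00 (p : R) : 0 < p -> nb_pmf 0 p 0 = 1.
Proof. by move=> p0; rewrite nb_pmfE Pr0 powRr0 !mulr1 divr1. Qed.

Lemma nb_pmf0S (p : R) m : nb_pmf 0 p m.+1 = 0.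
Proof. by rewrite nb_pmfE /Pr big_ord_recl /= add0r mul0r !mul0r. Qed.

Local Open Scope ereal_scope.

Lemma esumZl (T : choiceType) (S : set T) (c : R) (f : T -> \bar R) :
  (0 <= c)%R -> (forall x, 0 <= f x) ->
  \esum_(i in S) (c%:E * f i) = c%:E * \esum_(i in S) f i.
Proof.
move=> c0 f0; rewrite /esum -ereal_supZl //; last first.
  apply/set0P; exists 0; exists set0; [exact: fsets_set0| by rewrite fsbig_set0].
congr ereal_sup; apply/seteqP; split => y /=.
- case=> A hA <-; exists (\sum_(i \in A) f i); [by exists A | by rewrite ge0_mule_fsumr].
- case=> _ [A hA <-] <-; exists A => //; by rewrite ge0_mule_fsumr.
Qed.

Lemma conv2 (r s p : R) (g : nat -> \bar R) :
  (0 <= r)%R -> (0 <= s)%R -> (0 < p)%R -> (p <= 1)%R -> (forall n, 0 <= g n) ->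
  \esum_(xm in [set: nat] `*`` (fun _ => [set: nat]))
     ((nb_pmf r p xm.1 * nb_pmf s p xm.2)%:E * g (xm.1 + xm.2)%N)
  = \esum_(n in [set: nat]) ((nb_pmf (r + s) p n)%:E * g n).
Proof.
move=> r0 s0 p0 p1 g0.
rewrite (reindex_esum ([set: nat] `*`` (fun n => `I_n.+1)) _
   (fun nx => (nx.2, nx.1 - nx.2)%N)); last first.
  split.
  - by move=> [n x] _ /=.
  - move=> [n x] [n' x'] /set_mem [_ hx] /set_mem [_ hx'] [e1 e2]; subst x'.
    rewrite /= in hx hx'; congr pair; lia.
  - move=> [x m] _; exists (x + m, x)%N; last by rewrite /= addKn.
    by split => //=; rewrite ltnS leq_addr.
rewrite -(@esum_esum _ _ _ [set: nat] (fun n => `I_n.+1)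
   (fun n x => (nb_pmf r p x * nb_pmf s p (n - x))%:E * g (x + (n - x))%N)); last first.
  by move=> n x _ _; rewrite mule_ge0 // lee_fin mulr_ge0 // nb_pmf_ge0.
apply: eq_esum => n _.
rewrite esum_fset //; last first.
  by move=> x _; rewrite mule_ge0 // lee_fin mulr_ge0 // nb_pmf_ge0.
rewrite (eq_fsbigr (fun x => (nb_pmf r p x * nb_pmf s p (n - x))%:E * g n)); last first.
  by move=> x; rewrite inE /= ltnS => hx; rewrite subnKC.
rewrite -ge0_mule_fsuml; last by move=> x; rewrite lee_fin mulr_ge0 // nb_pmf_ge0.
by rewrite -fsbig_ord sumEFin nb_conv.
Qed.



Lemma conv_seq M (r p : R) (g : nat -> \bar R) :
  (0 <= r)%R -> (0 < p)%R -> (p <= 1)%R -> (forall n, 0 <= g n) ->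
  \esum_(s in [set s : seq nat | size s = M])
     ((\prod_(x <- s) nb_pmf r p x)%:E * g (sumn s))
  = \esum_(m in [set: nat]) ((nb_pmf (M%:R * r) p m)%:E * g m).
Proof.
move=> r0 p0 p1; elim: M g => [|M IH] g g0.
  have -> : [set s : seq nat | size s = 0%N] = [set [::]].
    by apply/seteqP; split => s /=; [move/size0nil | move=> ->].
  rewrite esum_set1; last by rewrite big_nil mul1e.
  rewrite big_nil mul1e mul0r.
  have -> : \esum_(m in [set: nat]) ((nb_pmf 0 p m)%:E * g m)
      = \esum_(m in [set 0%N]) ((nb_pmf 0 p m)%:E * g m).
    rewrite [RHS]esum_mkcond; apply: eq_esum => -[|m] _.
      by rewrite mem_set.
    by rewrite nb_pmf0S mul0e; case: ifP.
  by rewrite esum_set1 nb_pmf00 // ?mul1e // mule_ge0 // lee_fin nb_pmf_ge0.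
rewrite (reindex_esum ([set: nat] `*`` (fun _ => [set s : seq nat | size s = M])) _
   (fun xs => xs.1 :: xs.2)); last first.
  split.
  - by move=> [x s] [_ /= hs]; rewrite /= hs.
  - by move=> [x s] [x' s'] _ _ /= [-> ->].
  - move=> [|x s] //= [hs]; exists (x, s) => //.
under eq_esum => xs _ do rewrite big_cons /= EFinM -muleA.
rewrite -(@esum_esum _ _ _ [set: nat] (fun _ => [set s : seq nat | size s = M])
  (fun x s => (nb_pmf r p x)%:E * ((\prod_(y <- s) nb_pmf r p y)%:E * g (x + sumn s)%N)));
  last first.
  move=> x s _ _; rewrite !mule_ge0 // lee_fin ?nb_pmf_ge0 //.
  by apply: prodr_ge0 => y _; exact: nb_pmf_ge0.
have E : forall x, \esum_(s in [set s : seq nat | size s = M])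
    ((nb_pmf r p x)%:E * ((\prod_(y <- s) nb_pmf r p y)%:E * g (x + sumn s)%N))
  = \esum_(m in [set: nat]) ((nb_pmf r p x * nb_pmf (M%:R * r) p m)%:E * g (x + m)%N).
  move=> x; rewrite esumZl ?nb_pmf_ge0 //; last first.
    move=> s; rewrite !mule_ge0 // lee_fin.
    by apply: prodr_ge0 => y _; exact: nb_pmf_ge0.
  rewrite (IH (fun m => g (x + m)%N)) // -esumZl ?nb_pmf_ge0 //; last first.
    by move=> m; rewrite mule_ge0 // lee_fin nb_pmf_ge0 // mulr_ge0.
  by apply: eq_esum => m _; rewrite muleA -EFinM.
rewrite (eq_esum (fun x _ => E x)).
rewrite (@esum_esum _ _ _ [set: nat] (fun _ => [set: nat])
  (fun x m => (nb_pmf r p x * nb_pmf (M%:R * r) p m)%:E * g (x + m)%N)); last first.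
  move=> x m _ _; apply: mule_ge0 => //; rewrite lee_fin; apply: mulr_ge0;
  apply: nb_pmf_ge0 => //; exact: mulr_ge0.
have -> : ((M.+1)%:R * r = r + M%:R * r)%R by rewrite -addn1 natrD mulrDl mul1r addrC.
by rewrite -conv2 // mulr_ge0.
Qed.



Lemma map_nth_index (T : eqType) (L : seq T) (s : seq nat) :
  uniq L -> size s = size L -> [seq nth 0%N s (index j L) | j <- L] = s.
Proof.
elim: L s => [|a L IH] [|b s] //= /andP[aL uL] [hs].
rewrite eqxx /=; congr cons.
rewrite -[RHS](IH s uL hs); apply/eq_in_map => j jL /=.
by rewrite ifN //; apply: contraNneq aL => ->.
Qed.

Section Marg.
Variables (N : nat) (i : 'I_N).

Definition Lrest := [seq j <- enum 'I_N | j != i].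

Lemma Lrest_uniq : uniq Lrest.
Proof. by rewrite filter_uniq // enum_uniq. Qed.

Lemma mem_Lrest j : (j \in Lrest) = (j != i).
Proof. by rewrite mem_filter mem_enum andbT. Qed.

Lemma size_Lrest : size Lrest = (N - 1)%N.
Proof.
have -> : Lrest = rem i (enum 'I_N) by rewrite rem_filter // enum_uniq.
by rewrite size_rem ?mem_enum // size_enum_ord subn1.
Qed.

Definition emb (ns : nat * seq nat) : {ffun 'I_N -> nat} :=
  [ffun j => if j == i then ns.1 else nth 0%N ns.2 (index j Lrest)].

Lemma big_emb (T : Type) (idx : T) (op : Monoid.com_law idx) (F : nat -> T) n s :
  size s = (N - 1)%N ->
  \big[op/idx]_(j < N) F (emb (n, s) j) = op (F n) (\big[op/idx]_(x <- s) F x).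
Proof.
move=> hs; rewrite (bigD1 i) //= ffunE eqxx; congr (op _ _).
have -> : \big[op/idx]_(j < N | j != i) F (emb (n, s) j)
    = \big[op/idx]_(j <- Lrest) F (emb (n, s) j).
  by rewrite /Lrest big_filter [index_enum _]unlock -enumT.
rewrite -{2}(@map_nth_index _ Lrest s Lrest_uniq) ?size_Lrest // big_map.
rewrite big_seq [RHS]big_seq; apply: eq_bigr => j; rewrite mem_Lrest => ji.
by rewrite ffunE (negPf ji).
Qed.

Lemma emb_bij : set_bij ([set: nat] `*`` (fun _ => [set s : seq nat | size s = (N - 1)%N]))
   [set: {ffun 'I_N -> nat}] emb.
Proof.
split.
- by [].
- move=> [n s] [n' s'] /set_mem [_ /= hs] /set_mem [_ /= hs'] E.
  have En : n = n' by move: (congr1 (fun f : {ffun 'I_N -> nat} => f i) E); rewrite !ffunE eqxx.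
  congr pair => //.
  rewrite -(@map_nth_index _ Lrest s Lrest_uniq) ?size_Lrest //.
  rewrite -(@map_nth_index _ Lrest s' Lrest_uniq) ?size_Lrest //.
  apply/eq_in_map => j; rewrite mem_Lrest => ji.
  by move: (congr1 (fun f : {ffun 'I_N -> nat} => f j) E); rewrite !ffunE (negPf ji).
- move=> z _; exists (z i, [seq z j | j <- Lrest]).
    by split => //=; rewrite size_map size_Lrest.
  apply/ffunP => j; rewrite ffunE /=; case: eqP => [-> //|/eqP ji].
  have jL : j \in Lrest by rewrite mem_Lrest.
  by rewrite (nth_map i) ?index_mem // nth_index.
Qed.


Lemma marg (r p : R) (h : nat -> nat -> \bar R) :
  (0 <= r)%R -> (0 < p)%R -> (p <= 1)%R -> (forall a b, 0 <= h a b) ->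
  \esum_(z in [set: {ffun 'I_N -> nat}])
     ((\prod_(j < N) nb_pmf r p (z j))%:E * h (z i) (\sum_(j < N) z j)%N)
  = \esum_(zk in [set: nat * nat])
     ((nb_pmf r p zk.1 * nb_pmf ((N - 1)%:R * r) p zk.2)%:E * h zk.1 (zk.1 + zk.2)%N).
Proof.
move=> r0 p0 p1 h0.
rewrite (reindex_esum _ _ _ _ emb_bij).
transitivity (\esum_(ns in [set: nat] `*`` (fun _ => [set s : seq nat | size s = (N - 1)%N]))
  ((nb_pmf r p ns.1)%:E * ((\prod_(x <- ns.2) nb_pmf r p x)%:E * h ns.1 (ns.1 + sumn ns.2)%N))).
  apply: eq_esum => -[n s] [_ /= hs].
  rewrite big_emb // ffunE eqxx.
  rewrite (@big_emb nat 0%N addn id n s hs) /= -sumnE EFinM muleA.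
  by [].
have EE := (@esum_esum _ _ _ [set: nat] (fun _ => [set s : seq nat | size s = (N - 1)%N])
  (fun n s => (nb_pmf r p n)%:E * ((\prod_(x <- s) nb_pmf r p x)%:E * h n (n + sumn s)%N))).
rewrite /= in EE; rewrite -EE; last first.
  move=> x s _ _; rewrite !mule_ge0 // lee_fin ?nb_pmf_ge0 //.
  by apply: prodr_ge0 => y _; exact: nb_pmf_ge0.
have E : forall n, \esum_(s in [set s : seq nat | size s = (N - 1)%N])
    ((nb_pmf r p n)%:E * ((\prod_(y <- s) nb_pmf r p y)%:E * h n (n + sumn s)%N))
  = \esum_(m in [set: nat]) ((nb_pmf r p n * nb_pmf ((N - 1)%:R * r) p m)%:E * h n (n + m)%N).
  move=> n; rewrite esumZl ?nb_pmf_ge0 //; last first.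
    move=> s; rewrite !mule_ge0 // lee_fin.
    by apply: prodr_ge0 => y _; exact: nb_pmf_ge0.
  rewrite (@conv_seq (N - 1) r p (fun m => h n (n + m)%N)) // -esumZl ?nb_pmf_ge0 //; last first.
    by move=> m; rewrite mule_ge0 // lee_fin nb_pmf_ge0 // mulr_ge0.
  by apply: eq_esum => m _; rewrite muleA -EFinM.
rewrite (eq_esum (fun x _ => E x)).
rewrite (@esum_esum _ _ _ [set: nat] (fun _ => [set: nat])
  (fun n m => (nb_pmf r p n * nb_pmf ((N - 1)%:R * r) p m)%:E * h n (n + m)%N)); last first.
  move=> x m _ _; apply: mule_ge0 => //; rewrite lee_fin; apply: mulr_ge0;
  apply: nb_pmf_ge0 => //; exact: mulr_ge0.
have -> : [set: nat] `*`` (fun _ => [set: nat]) = [set: nat * nat] by apply/seteqP; split.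
by [].
Qed.

End Marg.



Lemma inf_sum (N : nat) (x : 'I_N -> int) (G : 'I_N -> int -> \bar R) :
  (forall i b, (x i <= b)%R -> 0 <= G i b) ->
  ereal_inf [set \sum_(i < N) G i (a i) | a in [set a : 'I_N -> int | forall i, (x i <= a i)%R]]
  = \sum_(i < N) ereal_inf [set G i b | b in [set b : int | (x i <= b)%R]].
Proof.
move=> G0.
pose I := fun i => ereal_inf [set G i b | b in [set b : int | (x i <= b)%R]].
rewrite (_ : \sum_(i < N) _ = \sum_(i < N) I i) //.
have I0 : forall i, 0 <= I i.
  by move=> i; apply: le_ereal_inf_tmp => _ [b hb <-]; exact: G0.
apply/eqP; rewrite eq_le; apply/andP; split; last first.
  apply: le_ereal_inf_tmp => _ [a ha <-]; apply: lee_sum => i _.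
  by apply: ereal_inf_lbound; exists (a i) => //; exact: ha.
have [[i0 Hi0]|Hfin] := pselect (exists i, I i = +oo).
  rewrite (bigD1 i0) //= Hi0 addye ?leey //.
  have : 0 <= \sum_(i < N | i != i0) I i by apply: sume_ge0 => i _.
  by case: (\sum_(i < N | i != i0) I i).
have fin : forall i, I i \is a fin_num.
  move=> i; rewrite ge0_fin_numE // lt_neqAle leey andbT.
  by apply/eqP => hi; apply: Hfin; exists i.
apply/lee_addgt0Pr => e e0.
set e' := (e / (N.+1)%:R)%R.
have e'0 : (0 < e')%R by rewrite divr_gt0 // ltr0n.
have ex : forall i, exists b, (x i <= b)%R /\ G i b < I i + e'%:E.
  move=> i; have [y [b hb <-] hy] := lb_ereal_inf_adherent e'0 (fin i).
  by exists b.
have [f hf] := choice ex.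
apply: ge_ereal_inf; exists (\sum_(i < N) G i (f i)).
  by exists f => // i; case: (hf i).
apply: (@le_trans _ _ (\sum_(i < N) (I i + e'%:E))).
  by apply: lee_sum => i _; apply: ltW; case: (hf i).
rewrite big_split /= leeD2l // sumEFin lee_fin sumr_const card_ord.
rewrite -mulr_natr /e' -mulrA ler_piMr ?ltW // mulrC ltr_pdivrMr ?ltr0n // mul1r ltr_nat.
by [].
Qed.



Lemma p_ep_bounds (beta0 : R) N t : (0 < beta0)%R ->
  (0 < p_ep beta0 N t)%R /\ (p_ep beta0 N t <= 1)%R.
Proof.
move=> b0; have bp : (0 < beta0 + (N * t)%:R)%R by rewrite ltr_wpDr.
rewrite /p_ep; split; first by rewrite divr_gt0 // ltr_wpDr.
by rewrite ler_pdivrMr ?mul1r ?lerDl // ltr_wpDr.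
Qed.

Lemma E_nb_ge0 (r p : R) f : (0 <= r)%R -> (p <= 1)%R -> (forall n, 0 <= f n) ->
  0 <= E_nb r p f.
Proof.
move=> r0 p1 f0; apply: esum_ge0 => n _; by rewrite mule_ge0 // lee_fin nb_pmf_ge0.
Qed.

Lemma pospart_ge0 (y : int) : (0 <= pospart R y)%R.
Proof. by rewrite /pospart le_max lexx. Qed.

Lemma cost_ge0 (alpha0 beta0 : R) N t (cv ch cb : R) (a x : int) k :
  (0 <= alpha0)%R -> (0 < beta0)%R -> (0 <= cv)%R -> (0 <= ch)%R -> (0 <= cb)%R ->
  (x <= a)%R -> 0 <= cost alpha0 beta0 N t cv ch cb a x k.
Proof.
move=> a0 b0 cv0 ch0 cb0 xa; have [_ p1] := p_ep_bounds N t b0.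
have r0 : (0 <= alpha0 + k%:R)%R by rewrite addr_ge0.
rewrite /cost /=; apply: adde_ge0; first apply: adde_ge0.
- by rewrite lee_fin mulr_ge0 // ler0z subr_ge0.
- by rewrite mule_ge0 // E_nb_ge0 // => n; rewrite lee_fin pospart_ge0.
- by rewrite mule_ge0 // E_nb_ge0 // => n; rewrite lee_fin pospart_ge0.
Qed.

Lemma valt_ge0 N (alpha0 beta0 cv ch cb : R) n t y k :
  (0 <= alpha0)%R -> (0 < beta0)%R -> (0 <= cv)%R -> (0 <= ch)%R -> (0 <= cb)%R ->
  0 <= valt N alpha0 beta0 cv ch cb n t y k.
Proof.
move=> a0 b0 cv0 ch0 cb0; elim: n t y k => [//|n IH] t y k /=.
have [_ p1] := p_ep_bounds N t b0.
have r0 : (0 <= alpha0 + k%:R)%R by rewrite addr_ge0.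
apply: le_ereal_inf_tmp => _ [a ha <-]; apply: adde_ge0; first exact: cost_ge0.
apply: esum_ge0 => zk _; rewrite mule_ge0 // lee_fin mulr_ge0 // nb_pmf_ge0 //.
by rewrite mulr_ge0.
Qed.



Lemma main_eq N (alpha0 beta0 : R) (cv ch cb : 'I_N -> R) :
  (0 <= alpha0)%R -> (0 < beta0)%R -> (forall i, 0 <= cv i)%R ->
  (forall i, 0 <= ch i)%R -> (forall i, 0 <= cb i)%R ->
  forall n t x k, vorig alpha0 beta0 cv ch cb n t x k
    = \sum_(i < N) valt N alpha0 beta0 (cv i) (ch i) (cb i) n t (x i) k.
Proof.
move=> a0 b0 cv0 ch0 cb0; elim=> [|n IH] t x k /=.
  by rewrite big1.
have -> : vorig alpha0 beta0 cv ch cb n t.+1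
   = fun y k' => \sum_(i < N) valt N alpha0 beta0 (cv i) (ch i) (cb i) n t.+1 (y i) k'.
  by apply: funext => y; apply: funext => k'; exact: IH.
have [p0 p1] := p_ep_bounds N t b0.
have r0 : (0 <= alpha0 + k%:R)%R by rewrite addr_ge0.
set V := fun i => valt N alpha0 beta0 (cv i) (ch i) (cb i) n t.+1.
have V0 : forall i y k', 0 <= V i y k' by move=> i y k'; exact: valt_ge0.
rewrite /bellman_orig /bellman_alt; cbv zeta.
apply: (eq_trans _ (inf_sum (G := fun i b =>
   cost alpha0 beta0 N t (cv i) (ch i) (cb i) b (x i) k
   + \esum_(zk in [set: nat * nat])
       ((nb_pmf (alpha0 + k%:R) (p_ep beta0 N t) zk.1
         * nb_pmf ((N - 1)%:R * (alpha0 + k%:R)) (p_ep beta0 N t) zk.2)%:E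
        * V i (b - (zk.1)%:Z)%R (k + zk.1 + zk.2)%N)) _)); last first.
  move=> i b hb; apply: adde_ge0; first exact: cost_ge0.
  apply: esum_ge0 => zk _; rewrite mule_ge0 // lee_fin mulr_ge0 // nb_pmf_ge0 //.
  by rewrite mulr_ge0.
congr ereal_inf; apply: eq_imagel => a ha /=.
rewrite [RHS]big_split; congr (_ + _).
under eq_esum => z _.
  rewrite ge0_sume_distrr; last by move=> i _; exact: V0.
  over.
rewrite esum_sum; last first.
  move=> z i _ _; apply: mule_ge0; last exact: V0.
  by rewrite lee_fin; apply: prodr_ge0 => j _; exact: nb_pmf_ge0.
apply: eq_bigr => i _.
rewrite (@marg N i (alpha0 + k%:R) (p_ep beta0 N t) (fun m s => V i (a i - m%:Z)%R (k + s)%N)) //.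
by apply: eq_esum => zk _; rewrite addnA.
Qed.

End Arith.

End H.

Theorem theorem2 (R : realType) (N T : nat) (alpha0 beta0 : R)
    (cv ch cb : 'I_N -> R)
    (hN : (1 <= N)%N) (hT : (1 <= T)%N)
    (ha : 0 < alpha0) (hb : 0 < beta0)
    (hcv : forall i, 0 < cv i) (hch : forall i, 0 < ch i) (hcb : forall i, 0 < cb i)
    (hbv : forall i, cv i < cb i)
    (t : nat) (ht : (t <= T)%N) (x : 'I_N -> int) (k : nat) :
  V_orig T alpha0 beta0 cv ch cb t x k
  = (\sum_(i < N) V_alt T alpha0 beta0 cv ch cb i t (x i) k)%E.
Proof.
rewrite /V_orig /V_alt.
exact: (H.main_eq (ltW ha) hb (fun i => ltW (hcv i)) (fun i => ltW (hch i))
  (fun i => ltW (hcb i))).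
Qed.
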